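(* Let $a\ge b\ge2$ be integers with $a/b\in\mathbb Z$, $\beta>1$ the positive root of $\beta^2=a\beta+b$, $\beta'=a-\beta$, and $\mathcal A=\{0,\dots,b-1\}$. For $n\ge1$ let $\mu_n=\min_{j\in\{0,1,\dots,b^n-1\}}P_{\mathrm{Pref}_{2n}(\mathbf h(j))}(\beta')$, and define sets $J_n\subseteq\mathbb Z$ by $J_0=\{0\}$ and \[ J_n=\Big\{j\in J_{n-1}+b^{n-1}\mathcal A:\ P_{\mathrm{Pref}_{2n}(\mathbf h(j))}(\beta')<\mu_n+|\beta'|^{2n+1}\tfrac{b-1}{1-(\beta')^2}\Big\}\quad(n\ge1). \] Then the sequence $(\mu_n)_{n\ge1}$ is non-increasing, and for every $n\ge1$, \[ \mu_n=\min_{j\in J_{n-1}+b^{n-1}\mathcal A}P_{\mathrm{Pref}_{2n}(\mathbf h(j))}(\beta'). \]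
   Context: For an algebraic integer $\beta$, the $\beta$-adic expansion of $x\in\mathbb Z[\beta]$ is the unique infinite word $\mathbf h(x)=u_0u_1u_2\cdots$ with $u_n\in\{0,1,\dots,|N(\beta)|-1\}$ such that $x-\sum_{i=0}^{n-1}u_i\beta^i\in\beta^n\mathbb Z[\beta]$ for all $n\in\mathbb N$; here $|N(\beta)|=b$. $\mathrm{Pref}_n(\mathbf u)$ is the prefix of length $n$ of $\mathbf u$; for a finite word $w=w_0\cdots w_{k-1}$, $P_w(X)=\sum_{i=0}^{k-1}w_iX^i$. $J+b^{n-1}\mathcal A=\{j+b^{n-1}d: j\in J, d\in\mathcal A\}$. *)

(* Defs.v *)
From HB Require Import structures.
From mathcomp Require Import all_boot all_order all_algebra.
Set Implicit Arguments. Unset Strict Implicit. Unset Printing Implicit Defensive.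
Import Order.TTheory GRing.Theory Num.Theory.
Local Open Scope ring_scope.

Section Defs.
Variable R : realFieldType.

(* x \in Z[beta] (beta a root of X^2 - aX - b, so Z[beta] = Z + Z beta) *)
Definition inZbeta (beta x : R) : Prop :=
  exists p q : int, x = p%:~R + q%:~R * beta.

Definition is_beta_expansion (b : nat) (beta x : R) (u : nat -> nat) : Prop :=
  (forall i, (u i < b)%N) /\
  forall n : nat, exists y : R, inZbeta beta y /\
    x - \sum_(i < n) (u i)%:R * beta ^+ i = beta ^+ n * y.

Definition Ppref (u : nat -> nat) (k : nat) (x : R) : R :=
  \sum_(i < k) (u i)%:R * x ^+ i.

Definition seqmin (s : seq int) (f : int -> R) : R :=
  foldr (fun j m => Num.min (f j) m) (f (head 0 s)) s.

Definition mu (b : nat) (h : int -> nat -> nat) (beta' : R) (n : nat) : R :=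
  seqmin [seq (k%:Z) | k <- iota 0 (b ^ n)%N]
         (fun j => Ppref (h j) (2 * n)%N beta').

Definition cands (b : nat) (J : seq int) (n : nat) : seq int :=
  [seq j + ((b ^ n) * d)%N%:Z | j <- J, d <- iota 0 b].

Fixpoint Jset (b : nat) (h : int -> nat -> nat) (beta' : R) (n : nat) : seq int :=
  match n with
  | 0 => [:: 0]
  | n'.+1 =>
      [seq j <- cands b (Jset b h beta' n') n' |
         Ppref (h j) (2 * n)%N beta' <
         mu b h beta' n + `|beta'| ^+ (2 * n).+1 * (b - 1)%N%:R / (1 - beta' ^+ 2)]
  end.

End Defs.

(* Main.v *)
Require Import Defs.
From HB Require Import structures.
From mathcomp Require Import all_boot all_order all_algebra.
From mathcomp Require Import ring lra zify.
Import Order.TTheory GRing.Theory Num.Theory.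
Set Implicit Arguments. Unset Strict Implicit.
Local Open Scope ring_scope.

Section S.
Variable R : realFieldType.
Variables (a b k : nat) (beta : R).
Hypothesis b2 : (2 <= b)%N.
Hypothesis ba : (b <= a)%N.
Hypothesis akb : a = (k * b)%N.
Hypothesis beta1 : 1 < beta.
Hypothesis beq : beta ^+ 2 = a%:R * beta + b%:R.

Local Notation Zb := (inZbeta beta).

Lemma Zb_int (z : int) : Zb z%:~R.
Proof. by exists z, 0; rewrite mul0r addr0. Qed.

Lemma Zb_nat (n : nat) : Zb n%:R.
Proof. by exists n, 0; rewrite mul0r addr0. Qed.

Lemma Zb_beta : Zb beta.
Proof. by exists 0, 1; rewrite mul1r add0r. Qed.

Lemma Zb_add x y : Zb x -> Zb y -> Zb (x + y).
Proof.
move=> [p [q ->]] [p' [q' ->]]; exists (p + p'), (q + q').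
rewrite !intrD; ring.
Qed.

Lemma Zb_opp x : Zb x -> Zb (- x).
Proof.
move=> [p [q ->]]; exists (- p), (- q).
rewrite !intrN; ring.
Qed.

Lemma Zb_sub x y : Zb x -> Zb y -> Zb (x - y).
Proof. by move=> hx hy; apply: Zb_add => //; apply: Zb_opp. Qed.

Lemma Zb_mul x y : Zb x -> Zb y -> Zb (x * y).
Proof.
move=> [p [q ->]] [p' [q' ->]].
exists (p * p' + q * q' * b%:Z), (p * q' + q * p' + q * q' * a%:Z).
rewrite !intrD !intrM.
have hA : (a%:Z)%:~R = a%:R :> R by [].
have hB : (b%:Z)%:~R = b%:R :> R by [].
rewrite hA hB.
apply/eqP; rewrite -subr_eq0; apply/eqP.
have E : beta ^+ 2 - (a%:R * beta + b%:R) = 0 by rewrite beq subrr.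
transitivity (q%:~R * q'%:~R * (beta ^+ 2 - (a%:R * beta + b%:R))); first by ring.
by rewrite E mulr0.
Qed.

Lemma Zb_exp x n : Zb x -> Zb (x ^+ n).
Proof.
move=> hx; elim: n => [|n IH]; first by rewrite expr0; apply: (Zb_nat 1).
by rewrite exprS; apply: Zb_mul.
Qed.

Lemma beta_gt0 : 0 < beta.
Proof. exact: lt_trans ltr01 beta1. Qed.

Lemma beta_gt_a : a%:R < beta.
Proof.
have hb : 2%:R <= b%:R :> R by rewrite ler_nat.
rewrite ltNge; apply/negP => H.
have H1 : 0 <= beta * (a%:R - beta) by apply: mulr_ge0; [exact: ltW beta_gt0| rewrite subr_ge0].
have E : beta * beta = a%:R * beta + b%:R by rewrite -expr2.
have E2 : beta * (a%:R - beta) = a%:R * beta - beta * beta by ring.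
lra.
Qed.

Lemma beta_lt : beta < a%:R + 1.
Proof.
have hb : b%:R <= a%:R :> R by rewrite ler_nat.
rewrite ltNge; apply/negP => H.
have H1 : 0 <= beta * (beta - (a%:R + 1)) by apply: mulr_ge0; [exact: ltW beta_gt0| rewrite subr_ge0].
have E : beta * beta = a%:R * beta + b%:R by rewrite -expr2.
have E2 : beta * (beta - (a%:R + 1)) = beta * beta - a%:R * beta - beta by ring.
lra.
Qed.

Lemma descent (s : nat) : (0 < s)%N -> forall r : int, s%:R * beta != r%:~R.
Proof.
elim/ltn_ind: s => s IH s0 r; apply/negP => /eqP E.
set s' := r - (a * s)%N%:Z.
have Es' : s'%:~R = s%:R * (beta - a%:R) :> R.
  rewrite /s' intrD intrN -E.
  have -> : ((a * s)%N%:Z)%:~R = a%:R * s%:R :> R by rewrite -natrM.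
  ring.
have hs : 0 < s%:R :> R by rewrite ltr0n.
have hba := beta_gt_a; have hbl := beta_lt.
have pos : 0 < s'.
  by rewrite -(ltr0z R) Es'; apply: mulr_gt0 => //; rewrite subr_gt0.
have lt : s' < s%:Z.
  rewrite -(ltr_int R) Es'.
  have -> : (s%:Z)%:~R = s%:R :> R by [].
  have H : 0 < s%:R * (1 - (beta - a%:R)) :> R by apply: mulr_gt0 => //; lra.
  lra.
have [t Et] : exists t : nat, s' = t by exists `|s'|%N; rewrite gez0_abs // ltW.
have ts : (t < s)%N by rewrite -ltz_nat -Et.
have t0 : (0 < t)%N by rewrite -ltz_nat -Et.
apply: (negP (IH t ts t0 (s%:Z * b%:Z))); apply/eqP.
have -> : t%:R = s'%:~R :> R by rewrite Et.
rewrite Es' intrM.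
have -> : (s%:Z)%:~R = s%:R :> R by [].
have -> : (b%:Z)%:~R = b%:R :> R by [].
have E2 : beta ^+ 2 - (a%:R * beta + b%:R) = 0 by rewrite beq subrr.
apply/eqP; rewrite -subr_eq0; apply/eqP.
transitivity (s%:R * (beta ^+ 2 - (a%:R * beta + b%:R))); first by ring.
by rewrite E2 mulr0.
Qed.

Lemma indep (r s : int) : r%:~R + s%:~R * beta = 0 -> s = 0 /\ r = 0.
Proof.
case: s => [[|n]|n] E.
- by split => //; apply/eqP; rewrite -(intr_eq0 R); move: E; rewrite mul0r addr0 => ->.
- exfalso; apply: (negP (@descent n.+1 (ltn0Sn n) (- r))); apply/eqP; rewrite intrN; apply/eqP; rewrite -addr_eq0 addrC.
  by apply/eqP; rewrite -E.
- exfalso; apply: (negP (@descent n.+1 (ltn0Sn n) r)); apply/eqP; move: E; rewrite NegzE intrN.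
  have -> : ((n.+1)%:Z)%:~R = n.+1%:R :> R by [].
  move=> E; apply/eqP; rewrite -subr_eq0 -opprB oppr_eq0; apply/eqP.
  by rewrite -E mulNr.
Qed.

Lemma zero_beta (c : int) y : Zb y -> c%:~R = beta * y ->
  - (b%:Z) < c < b%:Z -> c = 0.
Proof.
move=> [p [q ->]] E /andP [h1 h2].
have : (c - q * b%:Z)%:~R + (- (p + q * a%:Z))%:~R * beta = 0 :> R.
  rewrite intrD !intrN intrD !intrM E.
  have -> : (b%:Z)%:~R = b%:R :> R by [].
  have -> : (a%:Z)%:~R = a%:R :> R by [].
  have E2 : beta ^+ 2 - (a%:R * beta + b%:R) = 0 by rewrite beq subrr.
  transitivity (q%:~R * (beta ^+ 2 - (a%:R * beta + b%:R))); first by ring.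
  by rewrite E2 mulr0.
move=> /indep [_ H].
have Hc : c = q * b%:Z by apply/eqP; rewrite -subr_eq0; apply/eqP.
have hb2 : 2 <= b%:Z by rewrite lez_nat.
rewrite Hc in h1 h2 *.
have [q0|q0|->] := ltrgtP q 0; last by rewrite mul0r.
- have Hq : 0 <= (- q - 1) * b%:Z by apply: mulr_ge0; lia.
  lia.
- have Hq : 0 <= (q - 1) * b%:Z by apply: mulr_ge0; lia.
  lia.
Qed.

Lemma digit_eq (u v : nat) y : (u < b)%N -> (v < b)%N -> Zb y ->
  u%:R - v%:R = beta * y -> u = v.
Proof.
move=> hu hv hy E.
have : (u%:Z - v%:Z) = 0.
  apply: (@zero_beta _ y hy); first by rewrite intrD intrN.
  rewrite -!ltz_nat in hu hv; apply/andP; split; lia.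
lia.
Qed.

Lemma beta_neq0 : beta != 0.
Proof. by rewrite gt_eqF // beta_gt0. Qed.

Lemma cancel_pow n (A B : R) : beta ^+ n * A = beta ^+ n * B -> A = B.
Proof. by apply: mulfI; apply: expf_neq0; exact: beta_neq0. Qed.

Lemma agree (x x' : R) u v N w : is_beta_expansion b beta x u ->
  is_beta_expansion b beta x' v -> Zb w -> x - x' = beta ^+ N * w ->
  forall i, (i < N)%N -> u i = v i.
Proof.
move=> [hu eu] [hv ev] hw E.
suff H : forall n, (n <= N)%N -> forall i, (i < n)%N -> u i = v i.
  by move=> i hi; exact: (H N (leqnn N) i hi).
elim=> [|n IH] hn i0 hi; first by [].
have IH' := IH (ltnW hn).
rewrite ltnS leq_eqVlt in hi; case/orP: hi => [/eqP ->|hi]; last exact: IH'.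
have [y [hy Ey]] := eu n. have [z [hz Ez]] := eu n.+1.
have [y' [hy' Ey']] := ev n. have [z' [hz' Ez']] := ev n.+1.
have Sn : \sum_(i < n) (u i)%:R * beta ^+ i = \sum_(i < n) (v i)%:R * beta ^+ i.
  by apply: eq_bigr => i _; rewrite IH' // ltn_ord.
rewrite big_ord_recr /= in Ez. rewrite big_ord_recr /= in Ez'.
rewrite -Sn in Ey' Ez'.
have [t Nt] : exists t, N = (n.+1 + t)%N by exists (N - n.+1)%N; rewrite subnKC.
rewrite Nt exprD exprSr in E.
have H1 : y - (u n)%:R = beta * z.
  apply: (@cancel_pow n); rewrite mulrBr -Ey mulrA -exprSr -Ez; ring.
have H2 : y' - (v n)%:R = beta * z'.
  apply: (@cancel_pow n); rewrite mulrBr -Ey' mulrA -exprSr -Ez'; ring.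
have H3 : y - y' = beta * (beta ^+ t * w).
  apply: (@cancel_pow n); rewrite mulrBr -Ey -Ey'.
  transitivity (x - x'); first by ring.
  by rewrite E; ring.
apply: (digit_eq (hu n) (hv n) (Zb_sub (Zb_mul (Zb_exp t Zb_beta) hw) (Zb_sub hz hz'))).
lra.
Qed.

Definition eps : R := 1 + (k * k * b)%N%:R - k%:R * beta.

Lemma Zb_eps : Zb eps.
Proof. exists (1 + (k * k * b)%N%:Z), (- k%:Z); rewrite /eps intrN intrD; ring. Qed.

Lemma b_eps : b%:R = beta ^+ 2 * eps.
Proof.
apply/eqP; rewrite eq_sym -subr_eq0; apply/eqP.
have E2 : beta ^+ 2 - (a%:R * beta + b%:R) = 0 by rewrite beq subrr.
transitivity ((1 - k%:R * beta) * (beta ^+ 2 - (a%:R * beta + b%:R))).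
  by rewrite /eps akb !natrM; ring.
by rewrite E2 mulr0.
Qed.

Lemma eps_pow n : exists t, Zb t /\ eps ^+ n = 1 + beta * t.
Proof.
have E2 : beta ^+ 2 - (a%:R * beta + b%:R) = 0 by rewrite beq subrr.
set dl := (k * k)%N%:R * (beta - a%:R) - k%:R.
have hdl : Zb dl by apply: Zb_sub; [apply: Zb_mul; [apply: Zb_nat|apply: Zb_sub; [apply: Zb_beta|apply: Zb_nat]]|apply: Zb_nat].
have Ee : eps = 1 + beta * dl.
  apply/eqP; rewrite -subr_eq0; apply/eqP.
  transitivity (- (k * k)%N%:R * (beta ^+ 2 - (a%:R * beta + b%:R))).
    by rewrite /eps /dl !natrM; ring.
  by rewrite E2 mulr0.
elim: n => [|n [t [ht Et]]].
  by exists 0; split; [apply: (Zb_nat 0)|rewrite expr0 mulr0 addr0].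
exists (t + dl + beta * t * dl); split.
  by apply: Zb_add; [apply: Zb_add|apply: Zb_mul; [apply: Zb_mul; [apply: Zb_beta|]|]].
by rewrite exprSr Et Ee; ring.
Qed.

Lemma bpow n : (b ^ n)%N%:R = beta ^+ (2 * n) * eps ^+ n.
Proof. by rewrite natrX b_eps exprMn exprM. Qed.

Variable h : int -> nat -> nat.
Hypothesis hexp : forall j : int, is_beta_expansion b beta j%:~R (h j).

Lemma prefix_agree (j : int) n (c : int) i : (i < 2 * n)%N ->
  h (j + c * (b ^ n)%N%:Z) i = h j i.
Proof.
move=> hi; symmetry.
apply: (agree (hexp j) (hexp _) (w := - (c%:~R * eps ^+ n)) _ _ hi).
  by apply: Zb_opp; apply: Zb_mul; [apply: Zb_int|apply: Zb_exp; apply: Zb_eps].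
rewrite intrD intrM.
have -> : ((b ^ n)%N%:Z)%:~R = (b ^ n)%N%:R :> R by [].
rewrite bpow; ring.
Qed.

Lemma zero_digit (j : int) n : exists2 d, (d < b)%N & h (j + (b ^ n * d)%N%:Z) (2 * n) = 0.
Proof.
have [y [[p [q Eyp]] Ey]] := (hexp j).2 (2 * n)%N.
have bn0 : b%:Z != 0 by rewrite eqz_nat; case: b b2.
have bp0 : 0 < b%:Z by rewrite ltz_nat; case: b b2.
set d0 := ((- p) %% b%:Z)%Z.
have d0ge : 0 <= d0 := modz_ge0 _ bn0.
have d0lt : d0 < b%:Z := ltz_pmod _ bp0.
set d := `|d0|%N.
have Ed : d%:Z = d0 by rewrite gez0_abs.
exists d; first by rewrite -ltz_nat Ed.
set j' := j + (b ^ n * d)%N%:Z.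
have ag : forall i, (i < 2 * n)%N -> h j' i = h j i.
  by move=> i hi; rewrite /j' PoszM mulrC prefix_agree.
have [z [hz Ez]] := (hexp j').2 (2 * n).+1.
rewrite big_ord_recr /= in Ez.
have Sn : \sum_(i < 2 * n) (h j' i)%:R * beta ^+ i = \sum_(i < 2 * n) (h j i)%:R * beta ^+ i.
  by apply: eq_bigr => i _; rewrite ag // ltn_ord.
rewrite Sn in Ez.
set v := h j' (2 * n).
have xj : (j'%:~R : R) = j%:~R + (b ^ n)%N%:R * d%:R.
  by rewrite /j' intrD; congr (_ + _); exact: natrM.
rewrite xj bpow in Ez.
have F1 : y + eps ^+ n * d%:R - v%:R = beta * z.
  apply: (@cancel_pow (2 * n)); rewrite [RHS]mulrA -exprSr -Ez.
  transitivity (beta ^+ (2 * n) * y + beta ^+ (2 * n) * (eps ^+ n * d%:R) - beta ^+ (2 * n) * v%:R); first by ring.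
  by rewrite -Ey; ring.
have [t [ht Et]] := eps_pow n.
rewrite Et Eyp in F1.
set m := ((- p) %/ b%:Z)%Z.
have F4i : p + d0 = - (m * b%:Z).
  have := divz_eq (- p) b%:Z; rewrite -/m -/d0 => E; lia.
have F4 : p%:~R + d%:R = - (m%:~R * b%:R) :> R.
  have -> : d%:R = d0%:~R :> R by rewrite -Ed.
  by rewrite -intrD F4i intrN intrM.
have F5 : b%:R = beta * beta - a%:R * beta by rewrite -expr2 beq; ring.
rewrite F5 in F4.
apply: (@digit_eq v 0 (- m%:~R * (beta - a%:R) + q%:~R + t * d%:R - z)).
- by rewrite /v; case: (hexp j') => hh _; exact: hh.
- by case: b b2.
- apply: Zb_sub; last exact: hz.
  apply: Zb_add; last by apply: Zb_mul => //; apply: Zb_nat.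
  apply: Zb_add; last exact: Zb_int.
  apply: Zb_mul; first by apply: Zb_opp; apply: Zb_int.
  by apply: Zb_sub; [apply: Zb_beta|apply: Zb_nat].
lra.
Qed.

Local Notation x := (a%:R - beta).

Lemma x_neg : x < 0.
Proof. have := beta_gt_a; lra. Qed.

Lemma x_gtm1 : -1 < x.
Proof. have := beta_lt; lra. Qed.

Lemma even_pos n : 0 < x ^+ (2 * n).
Proof.
rewrite exprM; apply: exprn_gt0.
have := x_neg; have := x_gtm1 => h1 h2.
rewrite expr2; nra.
Qed.

Lemma odd_neg n : x ^+ (2 * n).+1 < 0.
Proof.
rewrite exprSr; have := even_pos n; have := x_neg => h1 h2; nra.
Qed.

Lemma D_pos : 0 < 1 - x ^+ 2.
Proof. have := x_neg; have := x_gtm1 => h1 h2; rewrite expr2; nra. Qed.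

Lemma PprefS2 (u : nat -> nat) n (y : R) :
  Ppref u n.+2 y = Ppref u n y + (u n)%:R * y ^+ n + (u n.+1)%:R * y ^+ n.+1.
Proof. by rewrite /Ppref !big_ord_recr. Qed.

Lemma tail_bound (v : nat -> nat) : (forall i, (v i < b)%N) -> forall m t,
  (Ppref v (2 * m + 2 * t) x - Ppref v (2 * m) x) * (1 - x ^+ 2) >=
  (b - 1)%N%:R * x ^+ (2 * m).+1 * (1 - x ^+ (2 * t)).
Proof.
move=> hv m; elim=> [|t IH].
  by rewrite muln0 addn0 subrr mulr0 subrr mul0r.

have -> : (2 * m + 2 * t.+1 = (2 * m + 2 * t).+2)%N by rewrite mulnS; lia.
rewrite PprefS2.
set K := (2 * m + 2 * t)%N.
set M := x ^+ (2 * m). set E := x ^+ (2 * t).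
have e1 : x ^+ K = M * E by rewrite exprD.
have e2 : x ^+ K.+1 = M * E * x by rewrite exprSr exprD.
have e3 : x ^+ (2 * m).+1 = M * x by rewrite exprSr.
have e4 : x ^+ (2 * t.+1) = E * (x * x) by rewrite mulnS exprD mulrC expr2.
rewrite e1 e2 e3 e4 expr2.
rewrite e3 expr2 in IH.
have hM : 0 <= M by exact: ltW (even_pos m).
have hE : 0 <= E by exact: ltW (even_pos t).
have hD : 0 <= 1 - x * x by rewrite -expr2; exact: ltW D_pos.
have hvk : 0 <= (v K)%:R :> R by [].
have hvk1 : (v K.+1)%:R - (b - 1)%N%:R <= 0 :> R.
  by rewrite subr_le0 ler_nat; have := hv K.+1; lia.
have key : 0 <= M * E * (1 - x * x) * ((v K)%:R + ((v K.+1)%:R - (b - 1)%N%:R) * x).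
  apply: mulr_ge0; first by apply: mulr_ge0 => //; apply: mulr_ge0.
  apply: addr_ge0 => //; apply: mulr_le0 => //; exact: ltW x_neg.
set P := Ppref v K x. set P0 := Ppref v (2 * m) x. set c := (b - 1)%N%:R.
set A := (v K)%:R. set B := (v K.+1)%:R.
rewrite -subr_ge0.
have -> : (P + A * (M * E) + B * (M * E * x) - P0) * (1 - x * x) - c * (M * x) * (1 - E * (x * x))
  = ((P - P0) * (1 - x * x) - c * (M * x) * (1 - E)) + M * E * (1 - x * x) * (A + (B - c) * x) by ring.
by apply: addr_ge0 => //; rewrite subr_ge0.
Qed.

Lemma tail_strict (v : nat -> nat) : (forall i, (v i < b)%N) -> forall m t,
  (Ppref v (2 * m + 2 * t) x - Ppref v (2 * m) x) * (1 - x ^+ 2) >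
  (b - 1)%N%:R * x ^+ (2 * m).+1.
Proof.
move=> hv m t.
have H := tail_bound hv m t.
have hc : 0 < (b - 1)%N%:R :> R by rewrite ltr0n; lia.
have hp : 0 < (b - 1)%N%:R * (- x ^+ (2 * m).+1) * x ^+ (2 * t).
  apply: mulr_gt0; last exact: even_pos.
  by apply: mulr_gt0 => //; rewrite oppr_gt0; exact: odd_neg.
lra.
Qed.

Lemma foldr_le (f : int -> R) s c y : y \in s ->
  foldr (fun j m => Num.min (f j) m) c s <= f y.
Proof.
elim: s => //= z s IH; rewrite in_cons => /orP [/eqP ->|hy].
  by rewrite ge_min lexx.
by rewrite ge_min IH ?orbT.
Qed.

Lemma foldr_mem (f : int -> R) s c :
  foldr (fun j m => Num.min (f j) m) c s = c \/
  exists2 y, y \in s & foldr (fun j m => Num.min (f j) m) c s = f y.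
Proof.
elim: s => [|z s IH] /=; first by left.
case: (leP (f z) (foldr (fun j m => Num.min (f j) m) c s)) => H.
  by right; exists z; rewrite ?mem_head.

case: IH => [E|[y hy E]]; first by left.
by right; exists y => //; rewrite in_cons hy orbT.
Qed.

Lemma seqmin_le (f : int -> R) s y : y \in s -> seqmin s f <= f y.
Proof. exact: foldr_le. Qed.

Lemma seqmin_mem (f : int -> R) s : s != [::] ->
  exists2 y, y \in s & seqmin s f = f y.
Proof.
case: s => // z s _; rewrite /seqmin /=.
have [E|[y hy E]] := foldr_mem f (z :: s) (f z).
  by exists z; rewrite ?mem_head //= E.
by exists y.
Qed.

Local Notation F n := (fun j : int => Ppref (h j) (2 * n)%N x).

Lemma b_gt0 : (0 < b)%N.
Proof. by case: b b2. Qed.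

Lemma bexp_gt0 n : (0 < b ^ n)%N.
Proof. by rewrite expn_gt0 b_gt0. Qed.

Lemma mu_le n (kk : nat) : (kk < b ^ n)%N -> mu b h x n <= F n kk.
Proof.
move=> hk; apply: seqmin_le; apply: map_f; rewrite mem_iota; lia.
Qed.

Lemma mu_mem n : exists2 kk : nat, (kk < b ^ n)%N & mu b h x n = F n kk.
Proof.
have ne : [seq (kk%:Z) | kk <- iota 0 (b ^ n)] != [::].
  rewrite -size_eq0 size_map size_iota -lt0n; exact: bexp_gt0.
have [y /mapP [kk hk ->] E] := seqmin_mem (F n) ne.
by exists kk => //; move: hk; rewrite mem_iota.
Qed.

Lemma mu_mono n : mu b h x n.+1 <= mu b h x n.
Proof.
have [kk hk E] := mu_mem n.
have [d hd Hd] := zero_digit kk n.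
have hb := bexp_gt0 n.
have hj : (kk + b ^ n * d < b ^ n.+1)%N.
  rewrite expnSr. set P := (b ^ n)%N. nia.
apply: le_trans (mu_le hj) _.
rewrite E /= PoszD.
have -> : (2 * n.+1 = (2 * n).+2)%N by lia.
rewrite PprefS2 Hd.
have -> : Ppref (h (kk%:Z + (b ^ n * d)%N%:Z)) (2 * n) x = Ppref (h kk) (2 * n) x.
  apply: eq_bigr => i _; congr ((_ : nat)%:R * _).
  by rewrite PoszM mulrC prefix_agree // ltn_ord.
rewrite mulr0n mul0r addr0 -[X in _ <= X]addr0 lerD2l.
apply: mulr_ge0_le0 => //; exact: ltW (odd_neg n).
Qed.

Lemma mu_mono_le M n : (M <= n)%N -> mu b h x n <= mu b h x M.
Proof.
elim: n => [|n IH]; first by rewrite leqn0 => /eqP ->.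
rewrite leq_eqVlt => /orP [/eqP ->|hM]; first by [].
exact: le_trans (mu_mono n) (IH hM).
Qed.

Lemma cands_bound m (J : seq int) y :
  (forall z, z \in J -> exists2 kk : nat, (kk < b ^ m)%N & z = kk%:Z) ->
  y \in cands b J m -> exists2 kk : nat, (kk < b ^ m.+1)%N & y = kk%:Z.
Proof.
move=> hJ /allpairsP [[j d] [hj hd ->]] /=.
have [kk hk ->] := hJ j hj.
move: hd; rewrite /= mem_iota add0n => /andP [_ hd].
exists (kk + b ^ m * d)%N; last by rewrite PoszD.
rewrite expnSr. set P := (b ^ m)%N in hk *.
have := leq_mul (leqnn P) hd; rewrite mulnS; lia.
Qed.

Lemma Jset_bound m y : y \in Jset b h x m -> exists2 kk : nat, (kk < b ^ m)%N & y = kk%:Z.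
Proof.
elim: m y => [|m IH] y /=.
  by rewrite inE => /eqP ->; exists 0%N.
rewrite mem_filter => /andP [_ hy].
exact: cands_bound IH hy.
Qed.

Lemma cands_mem m (J : seq int) (kk d : nat) : kk%:Z \in J -> (d < b)%N ->
  (kk + b ^ m * d)%N%:Z \in cands b J m.
Proof.
move=> hk hd; rewrite PoszD.
apply: (allpairs_f (fun j d => j + ((b ^ m) * d)%N%:Z)) => //.
by rewrite mem_iota; lia.
Qed.

Lemma mod_split (P kk : nat) : (0 < P)%N ->
  (kk %% (P * b) = kk %% P + P * (kk %/ P %% b))%N.
Proof.
move=> hP.
have h1 := ltn_pmod kk hP. have h2 := ltn_pmod (kk %/ P) b_gt0.
rewrite {1}(divn_eq kk P) {1}(divn_eq (kk %/ P) b).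
have -> : ((kk %/ P %/ b * b + kk %/ P %% b) * P + kk %% P =
  kk %/ P %/ b * (P * b) + (kk %% P + P * (kk %/ P %% b)))%N by ring.
rewrite modnMDl modn_small //.
set r := (kk %/ P %% b)%N. set s' := (kk %% P)%N. nia.
Qed.

Lemma filter_cond (ks m' m : nat) : (ks < b ^ m.+1)%N -> mu b h x m.+1 = F m.+1 ks ->
  (m'.+1 <= m)%N ->
  Ppref (h (ks %% b ^ m'.+1)%N%:Z) (2 * m'.+1) x <
  mu b h x m'.+1 + `|x| ^+ (2 * m'.+1).+1 * (b - 1)%N%:R / (1 - x ^+ 2).
Proof.
move=> hks Eks hm.
set M := m'.+1.
set j0 := (ks %% b ^ M)%N.
have hv : forall i, (h ks i < b)%N by move=> i; case: (hexp ks) => hh _; exact: hh.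
have [t Ht] : exists t, (2 * m.+1 = 2 * M + 2 * t)%N by exists (m.+1 - M)%N; lia.
have T := tail_strict hv M t.
rewrite -Ht -Eks in T.
have ag : Ppref (h ks) (2 * M) x = Ppref (h j0) (2 * M) x.
  apply: eq_bigr => i _; congr ((_ : nat)%:R * _).
  have -> : ks%:Z = j0%:Z + (ks %/ b ^ M)%N%:Z * (b ^ M)%N%:Z.
    by rewrite -PoszM -PoszD addnC -divn_eq.
  by rewrite prefix_agree // ltn_ord.
rewrite ag in T.
have mono := mu_mono_le (leqW hm).
set D := 1 - x ^+ 2 in T *.
have hD : 0 < D := D_pos.
set A := `|x| ^+ (2 * M).+1.
have EA : A = - x ^+ (2 * M).+1 by rewrite /A -normrX ltr0_norm // odd_neg.
set Q := A * (b - 1)%N%:R / D.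
have EQ : Q * D = A * (b - 1)%N%:R by rewrite /Q divfK // gt_eqF.
set P0 := Ppref (h j0) (2 * M) x in T *.
set mu1 := mu b h x m.+1 in T mono *.
have H : 0 < (mu1 - P0 + Q) * D.
  rewrite mulrDl EQ EA; lra.
rewrite pmulr_lgt0 // in H.
lra.
Qed.

Lemma part2 m : mu b h x m.+1 = seqmin (cands b (Jset b h x m) m) (F m.+1).
Proof.
have [ks hks Eks] := mu_mem m.+1.
have claim : forall m', (m' <= m)%N -> (ks %% b ^ m')%N%:Z \in Jset b h x m'.
  elim=> [|m' IH] hm'.
    by rewrite expn0 modn1 /= inE.
  have IH' := IH (ltnW hm').
  rewrite [Jset _ _ _ _]/= mem_filter; apply/andP; split.
    exact: (filter_cond hks Eks hm').
  rewrite expnSr mod_split ?bexp_gt0 //.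
  by apply: cands_mem => //; apply: ltn_pmod; exact: b_gt0.
have hmem : ks%:Z \in cands b (Jset b h x m) m.
  have -> : ks = (ks %% b ^ m + b ^ m * (ks %/ b ^ m))%N.
    by rewrite addnC mulnC -divn_eq.
  apply: cands_mem; first exact: claim.
  by rewrite ltn_divLR ?bexp_gt0 // -expnS.
apply/eqP; rewrite eq_le; apply/andP; split.
  have ne : cands b (Jset b h x m) m != [::].
    by apply/negP => /eqP E; rewrite E in hmem.
  have [y hy ->] := seqmin_mem (F m.+1) ne.
  have [kk hk ->] := cands_bound (@Jset_bound m) hy.
  exact: mu_le.
by rewrite Eks; exact: seqmin_le.
Qed.

End S.

Theorem mainTheorem11 (R : realFieldType) (a b : nat) (beta : R)
  (h : int -> nat -> nat) :
  (2 <= b)%N -> (b <= a)%N -> (b %| a)%N ->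
  1 < beta -> beta ^+ 2 = a%:R * beta + b%:R ->
  (forall j : int, is_beta_expansion b beta j%:~R (h j)) ->
  let beta' := a%:R - beta in
  (forall n : nat, (1 <= n)%N -> mu b h beta' n.+1 <= mu b h beta' n) /\
  (forall n : nat, (1 <= n)%N ->
     mu b h beta' n =
     seqmin (cands b (Jset b h beta' n.-1) n.-1)
            (fun j => Ppref (h j) (2 * n)%N beta')).
Proof.
move=> b2 ba dba beta1 beq hexp beta'.
have akb : a = (a %/ b * b)%N by rewrite divnK.
split.
  by move=> n _; exact: (mu_mono b2 ba akb beta1 beq hexp).
case=> [|m] // _.
exact: (part2 b2 ba akb beta1 beq hexp).
Qed.
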